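(* Let $L>0$, let $K$ be a positive integer, $\Delta x = L/K$, let $\Delta t>0$, $\alpha\in\mathbb{R}$, $\beta\in\mathbb{R}\setminus\{0\}$, and $q>1$. Suppose $u^{(0)},u^{(1)},\dots,u^{(m)}$ are $K$-periodic grid functions such that, for each $n=0,\dots,m-1$, $u^{(n+1)}$ is a solution of the energy-conservative scheme at step $n$ (see context), and let $r$ satisfy $$ r \ge \max_{m'\le m}\|u^{(m')}\|_\infty . $$ Define $$\varepsilon_1(q,r,\Delta x) = (q-1)(\Delta x)^3\left[\frac{|\alpha|}{6}(\Delta x)^2(q^2+q+1)r + \frac{3}{2}|\beta|(q+1)\right]^{-1},$$ $$\varepsilon_2(q,r,\Delta x) = (\Delta x)^3\left[\frac{|\alpha|}{6}(\Delta x)^2(2q+1)r + \frac{3}{2}|\beta|\right]^{-1}.$$ If $\Delta t < \min\{\varepsilon_1(q,r,\Delta x),\varepsilon_2(q,r,\Delta x)\}$, then the scheme at step $m$ admits a unique solution $u^{(m+1)}$ satisfying $\|u^{(m+1)}\|_\infty \le qr$.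
   Context: Grid functions are real sequences $v=(v_k)_{k\in\mathbb{Z}}$ with $v_{k+K}=v_k$. Define $\delta^{\langle 1\rangle}_x v_k = (v_{k+1}-v_{k-1})/(2\Delta x)$, $\delta^{\langle 2\rangle}_x v_k = (v_{k+1}-2v_k+v_{k-1})/(\Delta x)^2$, and $\|v\|_\infty=\max_k|v_k|$. For a sequence of grid functions $v^{(n)}$, let $\delta^+_t v^{(n)}_k = (v^{(n+1)}_k - v^{(n)}_k)/\Delta t$ and $\mu^+_t v^{(n)}_k = (v^{(n+1)}_k+v^{(n)}_k)/2$. Given $u^{(n)}$, a grid function $u^{(n+1)}$ is a solution of the scheme at step $n$ if for all $k\in\mathbb{Z}$ $$\delta^+_t u^{(n)}_k = -\frac{\alpha}{6}\,\delta^{\langle 1\rangle}_x\Big\{(u^{(n+1)}_k)^2 + u^{(n+1)}_k u^{(n)}_k + (u^{(n)}_k)^2\Big\} + \beta\,\delta^{\langle 1\rangle}_x\delta^{\langle 2\rangle}_x \mu^+_t u^{(n)}_k .$$ This is a discretization of the KdV equation $u_t=-\alpha u u_x+\beta u_{xxx}$ with $L$-periodic boundary conditions. *)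

(* Defs.v *)
From Stdlib Require Import Reals Lra Lia ZArith List.
Open Scope R_scope.

Definition grid := Z -> R.

Definition periodic (K : nat) (v : grid) : Prop :=
  forall k : Z, v (k + Z.of_nat K)%Z = v k.

Definition d1 (dx : R) (v : grid) : grid :=
  fun k => (v (k + 1)%Z - v (k - 1)%Z) / (2 * dx).

Definition d2 (dx : R) (v : grid) : grid :=
  fun k => (v (k + 1)%Z - 2 * v k + v (k - 1)%Z) / (dx ^ 2).

(* Max norm of a K-periodic grid function: max_k |v_k| = max over one period
   k = 0..K-1 (0 for K = 0, never used since K > 0). *)
Definition supnorm (K : nat) (v : grid) : R :=
  fold_right Rmax 0 (map (fun i => Rabs (v (Z.of_nat i))) (seq 0 K)).

Definition scheme_step (alpha beta dt dx : R) (un un1 : grid) : Prop :=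
  forall k : Z,
    (un1 k - un k) / dt =
      - (alpha / 6) * d1 dx (fun j => un1 j ^ 2 + un1 j * un j + un j ^ 2) k
      + beta * d1 dx (d2 dx (fun j => (un1 j + un j) / 2)) k.

Definition kdv_eps1 (alpha beta q r dx : R) : R :=
  (q - 1) * dx ^ 3 /
    (Rabs alpha / 6 * dx ^ 2 * (q ^ 2 + q + 1) * r + 3 / 2 * Rabs beta * (q + 1)).

Definition kdv_eps2 (alpha beta q r dx : R) : R :=
  dx ^ 3 /
    (Rabs alpha / 6 * dx ^ 2 * (2 * q + 1) * r + 3 / 2 * Rabs beta).

(* Main.v *)
Require Import Defs.
From Stdlib Require Import Reals Lra Lia ZArith List.
Open Scope R_scope.

Definition Fop (al be dx : R) (u w : grid) : grid := fun k =>
  - (al / 6) * Defs.d1 dx (fun j => w j ^ 2 + w j * u j + u j ^ 2) k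
  + be * Defs.d1 dx (Defs.d2 dx (fun j => (w j + u j) / 2)) k.

Lemma abs_mul_le c x X : Rabs x <= X -> Rabs (c * x) <= Rabs c * X.
Proof. intro H; rewrite Rabs_mult; apply Rmult_le_compat_l; [apply Rabs_pos|exact H]. Qed.

Lemma abs_coef c d : 0 < d -> Rabs (c * / d) = Rabs c * / d.
Proof. intro H; rewrite Rabs_mult, (Rabs_pos_eq (/ d)); [reflexivity|]. left; apply Rinv_0_lt_compat; exact H. Qed.

Lemma abs_bnd x M : Rabs x <= M -> - M <= x <= M.
Proof. intro H; split; [| apply Rle_trans with (Rabs x); [apply RRle_abs|exact H]].
  apply Rle_trans with (- Rabs x); [lra|]. rewrite <- Rabs_Ropp. 
  pose proof (RRle_abs (- x)). lra. Qed.

Lemma Fop_expand al be dx u w k : 0 < dx ->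
  Fop al be dx u w k =
  - (al * / (12 * dx)) * ((w (k+1)%Z ^ 2 + w (k+1)%Z * u (k+1)%Z + u (k+1)%Z ^ 2)
                      - (w (k-1)%Z ^ 2 + w (k-1)%Z * u (k-1)%Z + u (k-1)%Z ^ 2))
  + be * / (4 * dx ^ 3) * ((w (k+2)%Z + u (k+2)%Z) - 2 * (w (k+1)%Z + u (k+1)%Z)
        + 2 * (w (k-1)%Z + u (k-1)%Z) - (w (k-2)%Z + u (k-2)%Z)).
Proof.
  intro Hdx. unfold Fop, Defs.d1, Defs.d2.
  replace (k + 1 + 1)%Z with (k + 2)%Z by ring.
  replace (k + 1 - 1)%Z with k by ring.
  replace (k - 1 + 1)%Z with k by ring.
  replace (k - 1 - 1)%Z with (k - 2)%Z by ring.
  field. lra.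
Qed.
Lemma Fdiff al be dx u a b A r M k : 0 < dx ->
  (forall j, Rabs (a j) <= A) -> (forall j, Rabs (b j) <= A) ->
  (forall j, Rabs (u j) <= r) -> (forall j, Rabs (a j - b j) <= M) ->
  Rabs (Fop al be dx u a k - Fop al be dx u b k) <=
  (Rabs al / 6 * (2 * A + r) / dx + 3 * Rabs be / (2 * dx ^ 3)) * M.
Proof.
  intros Hdx Ha Hb Hu Hab.
  rewrite !Fop_expand by exact Hdx.
  set (a2 := a (k+2)%Z); set (a1 := a (k+1)%Z); set (a3 := a (k-1)%Z); set (a4 := a (k-2)%Z).
  set (b2 := b (k+2)%Z); set (b1 := b (k+1)%Z); set (b3 := b (k-1)%Z); set (b4 := b (k-2)%Z).
  set (u2 := u (k+2)%Z); set (u1 := u (k+1)%Z); set (u3 := u (k-1)%Z); set (u4 := u (k-2)%Z).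
  assert (HA: 0 <= A) by (apply Rle_trans with (Rabs (a 0%Z)); [apply Rabs_pos|apply Ha]).
  assert (Hr: 0 <= r) by (apply Rle_trans with (Rabs (u 0%Z)); [apply Rabs_pos|apply Hu]).
  assert (HM: 0 <= M) by (apply Rle_trans with (Rabs (a 0%Z - b 0%Z)); [apply Rabs_pos|apply Hab]).
  assert (P: forall x y z, Rabs x <= A -> Rabs y <= A -> Rabs z <= r -> Rabs (x - y) <= M ->
     Rabs ((x - y) * (x + y + z)) <= M * (2 * A + r)).
  { intros x y z Hx Hy Hz Hxy. rewrite Rabs_mult. apply Rmult_le_compat; try apply Rabs_pos; auto.
    apply Rle_trans with (Rabs (x + y) + Rabs z); [apply Rabs_triang|].
    pose proof (Rabs_triang x y). lra. }
  pose proof (P a1 b1 u1 (Ha _) (Hb _) (Hu _) (Hab _)) as P1.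
  pose proof (P a3 b3 u3 (Ha _) (Hb _) (Hu _) (Hab _)) as P3.
  pose proof (abs_bnd _ _ (Hab (k+2)%Z)) as E2.
  pose proof (abs_bnd _ _ (Hab (k+1)%Z)) as E1.
  pose proof (abs_bnd _ _ (Hab (k-1)%Z)) as E3.
  pose proof (abs_bnd _ _ (Hab (k-2)%Z)) as E4.
  fold a1 b1 a2 b2 a3 b3 a4 b4 in E1, E2, E3, E4.
  match goal with |- Rabs ?X <= _ =>
    replace X with (- (al * / (12 * dx)) * ((a1 - b1) * (a1 + b1 + u1) - (a3 - b3) * (a3 + b3 + u3))
      + be * / (4 * dx ^ 3) * ((a2 - b2) - 2 * (a1 - b1) + 2 * (a3 - b3) - (a4 - b4))) by ring end.
  eapply Rle_trans; [apply Rabs_triang|].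
  rewrite Ropp_mult_distr_l_reverse, Rabs_Ropp.
  eapply Rle_trans; [apply Rplus_le_compat; [apply (abs_mul_le _ _ (M * (2 * A + r) + M * (2 * A + r)))|apply (abs_mul_le _ _ (6 * M))]|].
  - eapply Rle_trans; [apply Rabs_triang|]. rewrite Rabs_Ropp. apply Rplus_le_compat; [exact P1|exact P3].
  - apply Rabs_le. lra.
  - assert (0 < dx ^ 3) by (apply pow_lt; lra).
    rewrite !abs_coef by lra.
    right. field. lra.
Qed.

Lemma Fbound al be dx u a A r k : 0 < dx ->
  (forall j, Rabs (a j) <= A) -> (forall j, Rabs (u j) <= r) ->
  Rabs (Fop al be dx u a k) <=
  Rabs al / 6 * (A ^ 2 + A * r + r ^ 2) / dx + 3 * Rabs be * (A + r) / (2 * dx ^ 3).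
Proof.
  intros Hdx Ha Hu.
  rewrite Fop_expand by exact Hdx.
  assert (HA: 0 <= A) by (apply Rle_trans with (Rabs (a 0%Z)); [apply Rabs_pos|apply Ha]).
  assert (Hr: 0 <= r) by (apply Rle_trans with (Rabs (u 0%Z)); [apply Rabs_pos|apply Hu]).
  assert (P: forall x z, Rabs x <= A -> Rabs z <= r ->
     Rabs (x ^ 2 + x * z + z ^ 2) <= A ^ 2 + A * r + r ^ 2).
  { intros x z Hx Hz.
    eapply Rle_trans; [apply Rabs_triang|]. 
    eapply Rle_trans; [apply Rplus_le_compat_r; apply Rabs_triang|].
    rewrite !Rabs_mult, <- !RPow_abs. simpl. rewrite !Rmult_1_r.
    pose proof (Rabs_pos x); pose proof (Rabs_pos z).
    repeat apply Rplus_le_compat; apply Rmult_le_compat; lra. }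
  assert (S: forall x z, Rabs x <= A -> Rabs z <= r -> - (A + r) <= x + z <= A + r).
  { intros x z Hx Hz. apply abs_bnd. eapply Rle_trans; [apply Rabs_triang|lra]. }
  pose proof (S _ _ (Ha (k+2)%Z) (Hu (k+2)%Z)).
  pose proof (S _ _ (Ha (k+1)%Z) (Hu (k+1)%Z)).
  pose proof (S _ _ (Ha (k-1)%Z) (Hu (k-1)%Z)).
  pose proof (S _ _ (Ha (k-2)%Z) (Hu (k-2)%Z)).
  pose proof (P _ _ (Ha (k+1)%Z) (Hu (k+1)%Z)).
  pose proof (P _ _ (Ha (k-1)%Z) (Hu (k-1)%Z)).
  eapply Rle_trans; [apply Rabs_triang|].
  rewrite Ropp_mult_distr_l_reverse, Rabs_Ropp.
  eapply Rle_trans; [apply Rplus_le_compat; [apply (abs_mul_le _ _ (2 * (A ^ 2 + A * r + r ^ 2)))|apply (abs_mul_le _ _ (6 * (A + r)))]|].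
  - eapply Rle_trans; [apply Rabs_triang|]. rewrite Rabs_Ropp. replace (2 * (A ^ 2 + A * r + r ^ 2)) with ((A ^ 2 + A * r + r ^ 2) + (A ^ 2 + A * r + r ^ 2)) by ring. apply Rplus_le_compat; eassumption.
  - apply Rabs_le. lra.
  - assert (0 < dx ^ 3) by (apply pow_lt; lra).
    rewrite !abs_coef by lra.
    right. field. lra.
Qed.

Definition Top (al be dt dx : R) (u w : grid) : grid := fun k => u k + dt * Fop al be dx u w k.

Lemma step_iff al be dt dx u w : 0 < dt ->
  (scheme_step al be dt dx u w <-> forall k, w k = Top al be dt dx u w k).
Proof.
  intro Hdt; unfold scheme_step, Top; split; intros H k; specialize (H k).
  - change ((w k - u k) / dt = Fop al be dx u w k) in H.
    rewrite <- H. field. lra.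
  - change ((w k - u k) / dt = Fop al be dx u w k).
    rewrite H at 1. field. lra.
Qed.

Lemma shiftK (K : nat) (f : grid) : periodic K f -> forall j z, f (j + z + Z.of_nat K)%Z = f (j + z)%Z.
Proof. intros H j z. apply H. Qed.

Lemma per_d1 K dx f : periodic K f -> periodic K (Defs.d1 dx f).
Proof.
  intros H k; unfold Defs.d1.
  replace (k + Z.of_nat K + 1)%Z with (k + 1 + Z.of_nat K)%Z by ring.
  replace (k + Z.of_nat K - 1)%Z with (k - 1 + Z.of_nat K)%Z by ring.
  rewrite !H. reflexivity.
Qed.

Lemma per_d2 K dx f : periodic K f -> periodic K (Defs.d2 dx f).
Proof.
  intros H k; unfold Defs.d2.
  replace (k + Z.of_nat K + 1)%Z with (k + 1 + Z.of_nat K)%Z by ring.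
  replace (k + Z.of_nat K - 1)%Z with (k - 1 + Z.of_nat K)%Z by ring.
  rewrite !H. reflexivity.
Qed.

Lemma per_Top K al be dt dx u w : periodic K u -> periodic K w -> periodic K (Top al be dt dx u w).
Proof.
  intros Hu Hw k. unfold Top, Fop.
  rewrite Hu.
  rewrite (per_d1 K dx (fun j => w j ^ 2 + w j * u j + u j ^ 2)).
  2:{ intro j. rewrite Hu, Hw. reflexivity. }
  rewrite (per_d1 K dx (Defs.d2 dx (fun j => (w j + u j) / 2))).
  2:{ apply per_d2. intro j. rewrite Hu, Hw. reflexivity. }
  reflexivity.
Qed.

Lemma per_all K v : periodic K v -> forall z j, v (j + z * Z.of_nat K)%Z = v j.
Proof.
  intros H z. induction z using Z.peano_ind; intro j.
  - f_equal. ring.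
  - replace (j + Z.succ z * Z.of_nat K)%Z with (j + z * Z.of_nat K + Z.of_nat K)%Z by ring.
    rewrite H. apply IHz.
  - rewrite <- (IHz j).
    replace (j + z * Z.of_nat K)%Z with (j + Z.pred z * Z.of_nat K + Z.of_nat K)%Z by (unfold Z.pred; ring).
    rewrite H. reflexivity.
Qed.

Lemma fold_max_ge l x : In x l -> x <= fold_right Rmax 0 l.
Proof.
  induction l as [|y l IH]; simpl; [tauto|].
  intros [->|Hin]; [apply Rmax_l|].
  eapply Rle_trans; [apply IH; exact Hin|apply Rmax_r].
Qed.

Lemma fold_max_le l M : 0 <= M -> (forall x, In x l -> x <= M) -> fold_right Rmax 0 l <= M.
Proof.
  intros HM; induction l as [|y l IH]; simpl; intro H; [exact HM|].
  apply Rmax_lub; [apply H; left; reflexivity|apply IH; intros; apply H; right; assumption].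
Qed.

Lemma supnorm_ge K v : (0 < K)%nat -> periodic K v -> forall k, Rabs (v k) <= supnorm K v.
Proof.
  intros HK Hp k.
  assert (HKz : (0 < Z.of_nat K)%Z) by lia.
  pose proof (Z.mod_pos_bound k (Z.of_nat K) HKz) as Hb.
  pose proof (Z.div_mod k (Z.of_nat K) ltac:(lia)) as Hd.
  assert (E: v k = v (Z.of_nat (Z.to_nat (k mod Z.of_nat K)))).
  { rewrite Z2Nat.id by lia. rewrite <- (per_all K v Hp (k / Z.of_nat K) (k mod Z.of_nat K)).
    f_equal. lia. }
  rewrite E. unfold supnorm. apply fold_max_ge.
  apply (in_map (fun i => Rabs (v (Z.of_nat i)))). apply in_seq. lia.
Qed.

Lemma supnorm_le K v M : 0 <= M -> (forall k, Rabs (v k) <= M) -> supnorm K v <= M.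
Proof.
  intros HM H. unfold supnorm. apply fold_max_le; [exact HM|].
  intros x Hx. apply in_map_iff in Hx. destruct Hx as [i [<- _]]. apply H.
Qed.

Lemma lim_le U l n x b : Un_cv U l -> (forall p, (p >= n)%nat -> Rabs (U p - x) <= b) -> Rabs (l - x) <= b.
Proof.
  intros Hl H. destruct (Rle_lt_dec (Rabs (l - x)) b) as [|Hlt]; [assumption|exfalso].
  destruct (Hl (Rabs (l - x) - b)) as [N HN]; [lra|].
  specialize (HN (Nat.max N n) ltac:(lia)). specialize (H (Nat.max N n) ltac:(lia)).
  unfold Rdist in HN.
  pose proof (Rabs_triang (l - U (Nat.max N n)) (U (Nat.max N n) - x)).
  replace (l - U (Nat.max N n) + (U (Nat.max N n) - x)) with (l - x) in H0 by ring.
  rewrite <- Rabs_Ropp in HN. replace (- (U (Nat.max N n) - l)) with (l - U (Nat.max N n)) in HN by ring.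
  lra.
Qed.

Lemma geo_zero c C x : 0 <= c < 1 -> 0 <= C -> (forall n, Rabs x <= C * c ^ n) -> x = 0.
Proof.
  intros Hc HC H. destruct (Req_dec x 0) as [|Hx]; [assumption|exfalso].
  pose proof (Rabs_pos_lt x Hx).
  destruct (pow_lt_1_zero c ltac:(rewrite Rabs_pos_eq; lra) (Rabs x / (C + 1))) as [N HN].
  { apply Rdiv_lt_0_compat; lra. }
  specialize (HN N (le_n N)). specialize (H N).
  rewrite Rabs_pos_eq in HN by (apply pow_le; lra).
  pose proof (pow_le c N ltac:(lra)).
  assert ((C + 1) * c ^ N < Rabs x).
  { replace (Rabs x) with ((C + 1) * (Rabs x / (C + 1))) by (field; lra).
    apply Rmult_lt_compat_l; lra. }
  nra.
Qed.

Fixpoint iterT (T : grid -> grid) (x0 : grid) (n : nat) : grid :=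
  match n with O => x0 | S n => T (iterT T x0 n) end.

Lemma Rdiv_le_0_compat x y : 0 <= x -> 0 < y -> 0 <= x / y.
Proof. intros; unfold Rdiv; apply Rmult_le_pos; [assumption|left; apply Rinv_0_lt_compat; assumption]. Qed.

Theorem theorem3p1
  (L : R) (K : nat) (dt alpha beta q r : R) (m : nat) (u : nat -> grid) :
  0 < L -> (0 < K)%nat -> 0 < dt -> beta <> 0 -> 1 < q ->
  (forall n : nat, (n <= m)%nat -> periodic K (u n)) ->
  (forall n : nat, (n < m)%nat ->
     scheme_step alpha beta dt (L / INR K) (u n) (u (S n))) ->
  (forall m' : nat, (m' <= m)%nat -> supnorm K (u m') <= r) ->
  dt < Rmin (kdv_eps1 alpha beta q r (L / INR K)) (kdv_eps2 alpha beta q r (L / INR K)) ->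
  exists v : grid,
    periodic K v /\
    scheme_step alpha beta dt (L / INR K) (u m) v /\
    supnorm K v <= q * r /\
    (forall w : grid,
       periodic K w ->
       scheme_step alpha beta dt (L / INR K) (u m) w ->
       supnorm K w <= q * r ->
       forall k : Z, w k = v k).
Proof.
  intros HL HK Hdt Hbeta Hq Hper _ Hsup Heps.
  set (dx := L / INR K) in *.
  assert (Hdx : 0 < dx).
  { unfold dx. apply Rdiv_lt_0_compat; [exact HL|]. apply lt_0_INR. exact HK. }
  assert (Hdx3 : 0 < dx ^ 3) by (apply pow_lt; exact Hdx).
  set (U := u m).
  assert (HUp : periodic K U) by (apply Hper; lia).
  assert (HU : forall j, Rabs (U j) <= r).
  { intro j. eapply Rle_trans; [apply (supnorm_ge K); assumption|]. apply Hsup. lia. }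
  assert (Hr : 0 <= r) by (eapply Rle_trans; [apply Rabs_pos|apply (HU 0%Z)]).
  assert (Hqr : 0 <= q * r) by nra.
  set (a := Rabs alpha) in *. set (b := Rabs beta) in *.
  assert (Ha : 0 <= a) by apply Rabs_pos.
  assert (Hb : 0 < b) by (apply Rabs_pos_lt; exact Hbeta).
  pose proof (Rlt_le_trans _ _ _ Heps (Rmin_l _ _)) as H1.
  pose proof (Rlt_le_trans _ _ _ Heps (Rmin_r _ _)) as H2.
  unfold kdv_eps1, kdv_eps2 in H1, H2. fold a b in H1, H2.
  set (E1 := a / 6 * dx ^ 2 * (q ^ 2 + q + 1) * r + 3 / 2 * b * (q + 1)) in H1.
  set (E2 := a / 6 * dx ^ 2 * (2 * q + 1) * r + 3 / 2 * b) in H2.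
  assert (HE1 : 0 < E1).
  { unfold E1. assert (0 <= a / 6 * dx ^ 2 * (q ^ 2 + q + 1) * r).
    { apply Rmult_le_pos; [|lra]. apply Rmult_le_pos; [|nra]. apply Rmult_le_pos; [lra|]. apply pow_le; lra. }
    nra. }
  assert (HE2 : 0 < E2).
  { unfold E2. assert (0 <= a / 6 * dx ^ 2 * (2 * q + 1) * r).
    { apply Rmult_le_pos; [|lra]. apply Rmult_le_pos; [|nra]. apply Rmult_le_pos; [lra|]. apply pow_le; lra. }
    nra. }
  assert (H1' : dt * E1 < (q - 1) * dx ^ 3).
  { replace ((q - 1) * dx ^ 3) with ((q - 1) * dx ^ 3 / E1 * E1) by (field; lra).
    apply Rmult_lt_compat_r; lra. }
  assert (H2' : dt * E2 < dx ^ 3).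
  { replace (dx ^ 3) with (dx ^ 3 / E2 * E2) by (field; lra).
    apply Rmult_lt_compat_r; lra. }
  set (coef := a / 6 * (2 * (q * r) + r) / dx + 3 * b / (2 * dx ^ 3)).
  set (c := dt * coef).
  assert (Hcoef : 0 <= coef).
  { unfold coef. assert (0 <= a / 6 * (2 * (q * r) + r) / dx).
    { unfold Rdiv. apply Rmult_le_pos; [|left; apply Rinv_0_lt_compat; lra]. apply Rmult_le_pos; lra. }
    assert (0 <= 3 * b / (2 * dx ^ 3)) by (apply Rdiv_le_0_compat; lra). lra. }
  assert (Hc0 : 0 <= c) by (unfold c; apply Rmult_le_pos; lra).
  assert (Hc1 : c < 1).
  { assert (c * dx ^ 3 = dt * E2) by (unfold c, coef, E2; field; lra). nra. }
  assert (HB : r + dt * (a / 6 * ((q * r) ^ 2 + (q * r) * r + r ^ 2) / dx + 3 * b * (q * r + r) / (2 * dx ^ 3)) <= q * r).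
  { assert (dt * (a / 6 * ((q * r) ^ 2 + (q * r) * r + r ^ 2) / dx + 3 * b * (q * r + r) / (2 * dx ^ 3))
       = r * (dt * E1) / dx ^ 3) by (unfold E1; field; lra).
    rewrite H. 
    assert (r * (dt * E1) <= r * ((q - 1) * dx ^ 3)) by (apply Rmult_le_compat_l; lra).
    assert (r * (dt * E1) / dx ^ 3 <= r * (q - 1)).
    { unfold Rdiv. apply Rle_trans with (r * ((q - 1) * dx ^ 3) * / dx ^ 3).
      - apply Rmult_le_compat_r; [left; apply Rinv_0_lt_compat; lra|lra].
      - right. field. lra. }
    lra. }
  set (T := Top alpha beta dt dx U).
  assert (Tbound : forall w, (forall j, Rabs (w j) <= q * r) -> forall j, Rabs (T w j) <= q * r).
  { intros w Hw j. unfold T, Top.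
    eapply Rle_trans; [apply Rabs_triang|].
    rewrite Rabs_mult, (Rabs_pos_eq dt) by lra.
    pose proof (Fbound alpha beta dx U w (q * r) r j Hdx Hw HU). fold a b in H.
    pose proof (HU j).
    eapply Rle_trans; [|exact HB]. apply Rplus_le_compat; [assumption|].
    apply Rmult_le_compat_l; lra. }
  assert (Tlip : forall w w' M, (forall j, Rabs (w j) <= q * r) -> (forall j, Rabs (w' j) <= q * r) ->
     (forall j, Rabs (w j - w' j) <= M) -> forall j, Rabs (T w j - T w' j) <= c * M).
  { intros w w' M Hw Hw' HM j. unfold T, Top.
    replace (U j + dt * Fop alpha beta dx U w j - (U j + dt * Fop alpha beta dx U w' j))
      with (dt * (Fop alpha beta dx U w j - Fop alpha beta dx U w' j)) by ring.
    rewrite Rabs_mult, (Rabs_pos_eq dt) by lra.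
    pose proof (Fdiff alpha beta dx U w w' (q * r) r M j Hdx Hw Hw' HU HM). fold a b coef in H.
    unfold c. rewrite Rmult_assoc. apply Rmult_le_compat_l; lra. }
  set (w := iterT T U).
  assert (wb : forall n j, Rabs (w n j) <= q * r).
  { induction n as [|n IH]; intro j; simpl.
    - eapply Rle_trans; [apply HU|]. nra.
    - apply Tbound. exact IH. }
  assert (wp : forall n, periodic K (w n)).
  { induction n as [|n IH]; simpl; [exact HUp|]. apply per_Top; assumption. }
  set (D := 2 * (q * r)).
  assert (HD : 0 <= D) by (unfold D; lra).
  assert (ws : forall n j, Rabs (w (S n) j - w n j) <= D * c ^ n).
  { induction n as [|n IH]; intro j.
    - simpl. rewrite Rmult_1_r. eapply Rle_trans; [apply Rabs_triang|].
      rewrite Rabs_Ropp. pose proof (wb 1%nat j). pose proof (wb 0%nat j). simpl in *. unfold D. lra.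
    - change (Rabs (T (w (S n)) j - T (w n) j) <= D * c ^ S n).
      eapply Rle_trans; [apply Tlip; [apply wb|apply wb|exact IH]|].
      simpl. right. ring. }
  assert (wc : forall n d j, Rabs (w (n + d)%nat j - w n j) <= D * (c ^ n - c ^ (n + d)) / (1 - c)).
  { intros n d j. induction d as [|d IH].
    - rewrite Nat.add_0_r. unfold Rminus. rewrite Rplus_opp_r, Rabs_R0.
      right. field. lra.
    - replace (w (n + S d)%nat j - w n j) with ((w (S (n + d)) j - w (n + d)%nat j) + (w (n + d)%nat j - w n j))
        by (rewrite Nat.add_succ_r; ring).
      eapply Rle_trans; [apply Rabs_triang|].
      eapply Rle_trans; [apply Rplus_le_compat; [apply ws|exact IH]|].
      rewrite Nat.add_succ_r. simpl. right. field. lra. }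
  assert (wc' : forall n p j, (p >= n)%nat -> Rabs (w p j - w n j) <= D / (1 - c) * c ^ n).
  { intros n p j Hp. replace p with (n + (p - n))%nat by lia.
    eapply Rle_trans; [apply wc|].
    pose proof (pow_le c (n + (p - n)) Hc0).
    unfold Rdiv. rewrite (Rmult_comm D (/ (1 - c))), (Rmult_assoc (/ (1 - c))), (Rmult_comm (/ (1 - c))).
    apply Rmult_le_compat_r; [left; apply Rinv_0_lt_compat; lra|]. nra. }
  assert (Hcau : forall j, Cauchy_crit (fun n => w n j)).
  { intros j eps Heps0.
    set (D' := D / (1 - c)).
    assert (HD' : 0 <= D') by (unfold D'; apply Rdiv_le_0_compat; lra).
    destruct (pow_lt_1_zero c ltac:(rewrite Rabs_pos_eq; lra) (eps / (2 * D' + 1))) as [N HN].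
    { apply Rdiv_lt_0_compat; lra. }
    exists N. intros n p Hn Hp. unfold Rdist.
    specialize (HN N (le_n N)). rewrite Rabs_pos_eq in HN by (apply pow_le; lra).
    pose proof (pow_le c N Hc0).
    assert ((2 * D' + 1) * c ^ N < eps).
    { replace eps with ((2 * D' + 1) * (eps / (2 * D' + 1))) by (field; lra).
      apply Rmult_lt_compat_l; lra. }
    pose proof (wc' N n j Hn) as H3. pose proof (wc' N p j Hp) as H4. fold D' in H3, H4.
    replace (w n j - w p j) with ((w n j - w N j) - (w p j - w N j)) by ring.
    eapply Rle_lt_trans; [apply Rabs_triang|]. rewrite Rabs_Ropp. assert (E: (2 * D' + 1) * c ^ N = 2 * (D' * c ^ N) + c ^ N) by ring. lra. }
  set (v := fun j => proj1_sig (R_complete _ (Hcau j))).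
  assert (Hv : forall j, Un_cv (fun n => w n j) (v j)) by (intro j; unfold v; apply proj2_sig).
  assert (vn : forall n j, Rabs (v j - w n j) <= D / (1 - c) * c ^ n).
  { intros n j. apply (lim_le _ _ n _ _ (Hv j)). intros p Hp. apply wc'. exact Hp. }
  assert (vb : forall j, Rabs (v j) <= q * r).
  { intro j. rewrite <- (Rminus_0_r (v j)). apply (lim_le _ _ 0 _ _ (Hv j)).
    intros p _. rewrite Rminus_0_r. apply wb. }
  assert (vp : periodic K v).
  { intro k. apply (UL_sequence (fun n => w n k)); [|apply Hv].
    intros eps He. destruct (Hv (k + Z.of_nat K)%Z eps He) as [N HN]. exists N.
    intros n Hn. rewrite <- (wp n k). apply HN. exact Hn. }
  assert (vfix : forall k, v k = T v k).
  { intro k. symmetry. apply Rminus_diag_uniq.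
    apply (geo_zero c (2 * (D / (1 - c)) * c)); [lra| |].
    { assert (0 <= D / (1 - c)) by (apply Rdiv_le_0_compat; lra). nra. }
    intro n.
    replace (T v k - v k) with ((T v k - T (w n) k) + (w (S n) k - v k)) by (change (w (S n) k) with (T (w n) k); ring).
    eapply Rle_trans; [apply Rabs_triang|].
    rewrite (Rabs_minus_sym (w (S n) k)).
    eapply Rle_trans; [apply Rplus_le_compat; [apply Tlip; [exact vb|apply wb|apply vn]|apply (vn (S n))]|].
    simpl. right. ring. }
  exists v. split; [exact vp|]. split.
  { apply step_iff; [exact Hdt|]. exact vfix. }
  split.
  { apply supnorm_le; [exact Hqr|exact vb]. }
  intros w' Hw'p Hw's Hw'n k.
  pose proof (proj1 (step_iff _ _ _ _ _ _ Hdt) Hw's) as Hfix; clear Hw's.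
  assert (w'b : forall j, Rabs (w' j) <= q * r).
  { intro j. eapply Rle_trans; [apply (supnorm_ge K); assumption|exact Hw'n]. }
  apply Rminus_diag_uniq.
  apply (geo_zero c D); [lra|exact HD|].
  intro n. revert k. induction n as [|n IH]; intro k.
  - simpl. rewrite Rmult_1_r. eapply Rle_trans; [apply Rabs_triang|].
    rewrite Rabs_Ropp. pose proof (w'b k). pose proof (vb k). unfold D. lra.
  - rewrite Hfix, vfix.
    eapply Rle_trans; [apply Tlip; [exact w'b|exact vb|exact IH]|].
    simpl. right. ring.
Qed.
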